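(* For every sufficiently large $n$, there exists a 3-uniform hypergraph $T$ with $10n$ vertices and $120n$ hyperedges, together with a set $Z\subseteq V(T)$ of $2n$ vertices, such that for any set $Z'\subseteq Z$ of $n$ vertices, the hypergraph obtained from $T$ by deleting the vertices of $Z'$ has a perfect matching.
   Context: A perfect matching of a hypergraph is a set of pairwise disjoint hyperedges covering all its vertices; deleting a vertex deletes it together with all hyperedges containing it. *)

(* Defs.v *)
From mathcomp Require Import all_boot.
Set Implicit Arguments. Unset Strict Implicit. Unset Printing Implicit Defensive.

Definition uniform (V : finType) (k : nat) (E : {set {set V}}) : Prop :=
  forall e, e \in E -> #|e| = k.

(* Hypergraph obtained by deleting the vertex set D: vertex set ~: D, and
   the hyperedges of E that avoid D. *)
Definition del_edges (V : finType) (E : {set {set V}}) (D : {set V}) : {set {set V}} :=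
  [set e in E | [disjoint e & D]].

Definition perfect_matching (V : finType) (W : {set V}) (E : {set {set V}})
    (M : {set {set V}}) : Prop :=
  M \subset E /\ trivIset M /\ cover M = W.

Definition has_perfect_matching (V : finType) (W : {set V}) (E : {set {set V}}) : Prop :=
  exists M : {set {set V}}, perfect_matching W E M.

(* Main.v *)
Require Import Defs.
From mathcomp Require Import all_boot zify.
Set Implicit Arguments. Unset Strict Implicit. Unset Printing Implicit Defensive.

Lemma nth_lt_iff (t : seq nat) i j : sorted ltn t -> i < size t -> j < size t ->
  (nth 0 t i < nth 0 t j) = (i < j).
Proof.
move=> st hi hj; have H := sorted_ltn_nth ltn_trans 0 st.
case: (ltngtP i j) => [lij|lji|->]; last by rewrite ltnn.
- by apply: H.
- by apply/negbTE; rewrite -leqNgt ltnW //; apply: H.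
Qed.

Lemma gap (t : seq nat) N i : sorted ltn t -> (forall y, y \in t -> y < N) ->
  (forall v, v < N -> ~~ (5 %| v) -> v \in t) -> i.+2 < size t ->
  nth 0 t i.+2 <= nth 0 t i + 3.
Proof.
move=> st tN cov hi; rewrite leqNgt; apply/negP => hc.
set a := nth 0 t i in hc *; set c := nth 0 t i.+2 in hc.
have cN : c < N by apply: tN; apply: mem_nth.
have key : forall y, a < y < c -> ~~ (5 %| y) -> y = nth 0 t i.+1.
  move=> y /andP[ay yc] ny.
  have yt : y \in t by apply: cov => //; lia.
  have hj := yt; rewrite -index_mem in hj.
  have ey := nth_index 0 yt.
  set j := index y t in hj ey.
  have h1 : i < j by rewrite -(nth_lt_iff st) ?ey //; lia.
  have h2 : j < i.+2 by rewrite -(nth_lt_iff st) ?ey //.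
  have -> : i.+1 = j by lia.
  by rewrite ey.
have go : forall d1 d2, a < d1 < c -> a < d2 < c -> d1 != d2 ->
    ~~ (5 %| d1) -> ~~ (5 %| d2) -> False.
  move=> d1 d2 h1 h2 h3 h4 h5.
  by move/eqP: h3; rewrite (key _ h1 h4) (key _ h2 h5).
case: (boolP (5 %| a.+1)) => h.
  by apply: (go a.+2 a.+3); try (apply/andP; lia); lia.
case: (boolP (5 %| a.+2)) => h'.
  by apply: (go a.+1 a.+3); try (apply/andP; lia); lia.
by apply: (go a.+1 a.+2); try (apply/andP; lia); lia.
Qed.

Lemma match_ex N (Z' : {set 'I_N}) : (forall x, x \in Z' -> 5 %| x) -> 3 %| #|~: Z'| ->
  exists M : {set {set 'I_N}}, partition M (~: Z') /\
   forall K, K \in M -> exists x y z : 'I_N, K = [set x; y; z] /\ x < y < z /\ z <= x + 3.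
Proof.
move=> hZ h3; set W := ~: Z'; set s := enum W; set t := map val s.
have st : sorted ltn t.
  have -> : t = [seq val x | x <- filter (mem W) (enum 'I_N)] by rewrite /t /s enumT.
  apply: (subseq_sorted ltn_trans (map_subseq val (filter_subseq _ _))).
  by rewrite val_enum_ord iota_ltn_sorted.
have tN : forall y, y \in t -> y < N by move=> y /mapP[z _ ->]; apply: ltn_ord.
have cov : forall v, v < N -> ~~ (5 %| v) -> v \in t.
  move=> v vN nv; apply/mapP; exists (Ordinal vN) => //.
  rewrite /s mem_enum /W inE; apply/negP => /hZ; exact/negP.
have us : uniq s by apply: enum_uniq.
have sz : size s = #|W| by rewrite cardE.
have szt : size t = size s by rewrite size_map.
exists (preim_partition (fun v => index v s %/ 3) W); split; first exact: preim_partitionP.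
move=> K /imsetP[x xW ->].
have xs : x \in s by rewrite mem_enum.
have hi : index x s < size s by rewrite index_mem.
set k := index x s %/ 3.
have hk : 3 * k + 2 < size s by move: h3 hi; rewrite -sz /k; lia.
have hk0 : 3 * k < size s by apply: leq_trans hk; lia.
have hk1 : (3 * k).+1 < size s by apply: leq_trans hk; lia.
have hk2 : (3 * k).+2 < size s by apply: leq_trans hk; lia.
have vn : forall j, j < size s -> nat_of_ord (nth x s j) = nth 0 t j.
  by move=> j hj; rewrite /t (nth_map x).
have ix : forall j, j < size s -> index (nth x s j) s = j by move=> j hj; rewrite index_uniq.
exists (nth x s (3 * k)), (nth x s (3 * k).+1), (nth x s (3 * k).+2); split.
  apply/setP => y; rewrite !inE; apply/idP/idP.
    case/andP => yW /eqP hy.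
    have ys : y \in s by rewrite /s mem_enum /W inE.
    have ey := nth_index x ys.
    have : index y s = 3 * k \/ index y s = (3 * k).+1 \/ index y s = (3 * k).+2.
      by move: hy; rewrite /k; lia.
    by case=> [|[]] hh; rewrite -ey hh eqxx ?orbT.
  have hW : forall j, j < size s -> nth x s j \notin Z'.
    by move=> j hj; have := mem_nth x hj; rewrite /s mem_enum /W inE.
  case/orP => [/orP[]|] /eqP ->; rewrite hW ?ix //=; lia.
rewrite !vn; try lia.
rewrite !(nth_lt_iff st) ?szt; try lia.
split; first by apply/andP; split.
by apply: (gap (N:=N)) => //; rewrite szt.
Qed.

Lemma pad (T : finType) (B S0 : {set T}) k : B \subset S0 -> #|B| <= k <= #|S0| ->
  exists E : {set T}, [/\ B \subset E, E \subset S0 & #|E| = k].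
Proof.
move=> BS /andP[h1 h2].
have [m km] : exists m, k = #|B| + m by exists (k - #|B|); lia.
rewrite km in h2 *; clear km h1.
elim: m h2 => [|m IH] h2; first by exists B; rewrite addn0; split.
have [E [BE ES cE]] : exists E : {set T}, [/\ B \subset E, E \subset S0 & #|E| = #|B| + m].
  by apply: IH; apply: leq_trans h2; rewrite leq_add2l.
have : #|E| < #|S0| by rewrite cE -addnS.
move=> hl; have : E \proper S0 by rewrite properEcard ES hl.
case/properP => _ [x xS xE].
exists (x |: E); split.
- by apply: subset_trans BE (subsetUr _ _).
- by rewrite subUset sub1set xS ES.
- by rewrite cardsU1 xE cE addnS.
Qed.

Lemma binbound n : 0 < n -> 120 * n <= 'C(10 * n, 3).
Proof.
move=> hn; have h := bin_ffact (10 * n) 3.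
rewrite !ffactnS ffactn0 /= in h.
have ha : 9 <= (10 * n).-1 by lia.
have hb : 8 <= (10 * n).-2 by lia.
have : 10 * n * (9 * 8) <= 10 * n * ((10 * n).-1 * ((10 * n).-2 * 1)).
  by rewrite muln1 leq_mul2l leq_mul // orbT.
rewrite -h (_ : 3`! = 6) //; lia.
Qed.

Lemma f5_proof n (j : 'I_(2 * n)) : 5 * j < 10 * n.
Proof. have := ltn_ord j; lia. Qed.

Definition f5 n (j : 'I_(2 * n)) : 'I_(10 * n) := Ordinal (f5_proof j).

Definition gtri N (p : 'I_N * 'I_3 * 'I_3) : {set 'I_N} :=
  [set p.1.1; insubd p.1.1 (p.1.1 + p.1.2 + 1); insubd p.1.1 (p.1.1 + p.2 + 1)].

Lemma tri_in N (x y z : 'I_N) : x < y < z -> z <= x + 3 ->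
  [set x; y; z] \in [set e in (@gtri N) @: setT | #|e| == 3].
Proof.
move=> /andP[xy yz] zx; rewrite inE; apply/andP; split.
  have hy : y - x - 1 < 3 by lia.
  have hz : z - x - 1 < 3 by lia.
  apply/imsetP; exists (x, Ordinal hy, Ordinal hz) => //.
  rewrite /gtri /=; congr [set _; _; _]; apply: val_inj; rewrite val_insubd /=.
    have -> : x + (y - x - 1) + 1 = y by lia.
    by rewrite ltn_ord.
  have -> : x + (z - x - 1) + 1 = z by lia.
  by rewrite ltn_ord.
rewrite setUC cardsU1 cards2 !inE.
have -> : (x == y) = false by apply/negbTE; rewrite neq_ltn xy.
have -> : (z == x) = false by apply/negbTE; rewrite neq_ltn (ltn_trans xy yz) orbT.
have -> : (z == y) = false by apply/negbTE; rewrite neq_ltn yz orbT.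
by [].
Qed.

Theorem lemma5p2 :
  exists N : nat, forall n : nat, N <= n ->
    exists (E : {set {set 'I_(10 * n)}}) (Z : {set 'I_(10 * n)}),
      [/\ uniform 3 E, #|E| = 120 * n, #|Z| = 2 * n &
        forall Z' : {set 'I_(10 * n)}, Z' \subset Z -> #|Z'| = n ->
          has_perfect_matching (~: Z') (del_edges E Z')].
Proof.
exists 1 => n hn.
set B := [set e in (@gtri (10 * n)) @: setT | #|e| == 3].
set S := [set e : {set 'I_(10 * n)} | #|e| == 3].
have BS : B \subset S by apply/subsetP => e; rewrite !inE => /andP[].
have cB : #|B| <= 120 * n.
  have sB : B \subset (@gtri (10 * n)) @: setT.
    by apply/subsetP => e; rewrite inE => /andP[].
  apply: leq_trans (subset_leq_card sB) _.
  apply: leq_trans (leq_imset_card _ _) _.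
  by rewrite cardsT card_prod card_prod !card_ord; lia.
have cS : 120 * n <= #|S| by rewrite card_draws card_ord; apply: binbound.
have [E [BE ES cE]] := pad BS (introT andP (conj cB cS)).
exists E, ((@f5 n) @: setT); split => //.
- by move=> e /(subsetP ES); rewrite inE => /eqP.
- rewrite card_imset ?cardsT ?card_ord //.
  by move=> i j /(congr1 val) /= h; apply: val_inj => /=; lia.
move=> Z' sZ cZ.
have hZ : forall x, x \in Z' -> 5 %| x.
  by move=> x /(subsetP sZ) /imsetP [j _ ->] /=; apply: dvdn_mulr.
have h3 : 3 %| #|~: Z'|.
  have := cardsC Z'; rewrite card_ord cZ => h.
  have -> : #|~: Z'| = 3 * (3 * n) by lia.
  by apply: dvdn_mulr.
have [M [pM hM]] := match_ex hZ h3.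
case/and3P: pM => /eqP cov triv _.
exists M; split; last by split.
apply/subsetP => K KM; rewrite inE; apply/andP; split.
  have [x [y [z [-> [h1 h2]]]]] := hM K KM.
  by apply: (subsetP BE); apply: tri_in.
by rewrite disjoints_subset -cov; apply: bigcup_sup KM.
Qed.
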